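(* Let $1\le q<2$ and let $\mathbf{x}_k$ be a data point with $\mathbf{x}_k\ne\mathbf{M}$. Then there exists $\delta_0>0$ such that for every $\mathbf{y}\in B(\mathbf{x}_k,\delta_0)\setminus\{\mathbf{x}_k\}$ there is an integer $s\ge1$ (depending on $\mathbf{y}$) with $\mathbf{T}_1^{j}(\mathbf{y})\in B(\mathbf{x}_k,\delta_0)$ for $0\le j\le s-1$ and $\mathbf{T}_1^{s}(\mathbf{y})\notin B(\mathbf{x}_k,\delta_0)$. Here $B(\mathbf{x}_k,\delta_0)$ is the open Euclidean ball and $\mathbf{T}_1^{j}$ is the $j$-fold iterate of $\mathbf{T}_1$.
   Context: Let $\mathbf{x}_1,\dots,\mathbf{x}_m\in\mathbb{R}^d$ be distinct data points, not all lying on a common affine line, and $\eta_1,\dots,\eta_m>0$. $C_q(\mathbf{y})=\sum_{i=1}^m \eta_i^q\|\mathbf{y}-\mathbf{x}_i\|^q$ is strictly convex with unique minimizer $\mathbf{M}$. $\mathbf{T}_1(\mathbf{y})=\frac{\sum_{i} \eta_i^q\|\mathbf{y}-\mathbf{x}_i\|^{q-2}\mathbf{x}_i}{\sum_{i} \eta_i^q\|\mathbf{y}-\mathbf{x}_i\|^{q-2}}$ for $\mathbf{y}\notin\{\mathbf{x}_i\}$, extended by $\mathbf{T}_1(\mathbf{x}_i)=\mathbf{x}_i$. *)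

(* Defs.v *)
From HB Require Import structures.
From mathcomp Require Import all_boot all_order all_algebra.
From mathcomp Require Import all_classical all_reals.
From mathcomp Require Import exp.
Set Implicit Arguments. Unset Strict Implicit. Unset Printing Implicit Defensive.
Import Order.TTheory GRing.Theory Num.Theory.
Local Open Scope ring_scope.

Definition enorm (R : realType) (d : nat) (v : 'rV[R]_d) : R :=
  Num.sqrt (\sum_(i < d) v ord0 i ^+ 2).

Definition Cq (R : realType) (d m : nat) (q : R) (x : 'I_m -> 'rV[R]_d)
  (eta : 'I_m -> R) (y : 'rV[R]_d) : R :=
  \sum_(i < m) powR (eta i) q * powR (enorm (y - x i)) q.

Definition T1 (R : realType) (d m : nat) (q : R) (x : 'I_m -> 'rV[R]_d)
  (eta : 'I_m -> R) (y : 'rV[R]_d) : 'rV[R]_d :=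
  if [exists i, y == x i] then y
  else (\sum_(i < m) powR (eta i) q * powR (enorm (y - x i)) (q - 2))^-1 *:
       \sum_(i < m) (powR (eta i) q * powR (enorm (y - x i)) (q - 2)) *: x i.

Definition collinear (R : realType) (d m : nat) (x : 'I_m -> 'rV[R]_d) : Prop :=
  exists (p v : 'rV[R]_d), v != 0 /\ forall i, exists t : R, x i = p + t *: v.

(* Main.v *)
Require Import Defs.
From HB Require Import structures.
From mathcomp Require Import all_boot all_order all_algebra.
From mathcomp Require Import all_classical all_reals.
From mathcomp Require Import sequences exp.
From mathcomp Require Import ring lra.
Import Order.TTheory GRing.Theory Num.Theory.
Local Open Scope ring_scope.

Section S.
Context {R : realType}.
Implicit Types a b p e s t beta : R.

Lemma tangent_ge1 p a b : 1 <= p -> 0 <= a -> 0 < b ->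
  b `^ p + p * b `^ (p-1) * (a - b) <= a `^ p.
Proof.
move=> p1 a0 b0.
have [->|pn1] := eqVneq p 1.
  rewrite subrr powRr0 !powRr1 ?(ltW b0)// !mul1r; lra.
have p1' : 1 < p by rewrite lt_neqAle eq_sym pn1.
have p0 : 0 < p by lra.
pose q := p / (p - 1).
have pm0 : 0 < p - 1 by lra.
have q0 : 0 < q by rewrite divr_gt0.
have pq : p^-1 + q^-1 = 1.
  by rewrite /q invf_div -{1}(div1r p) -mulrDl subrKC mulfV// gt_eqF.
have := conjugate_powR a0 (powR_ge0 b (p-1)) p0 q0 pq.
rewrite -powRrM /q mulrCA mulfV ?gt_eqF// mulr1.
have e1 : a `^ p / p + b `^ p / (p / (p - 1)) = (a `^ p + (p - 1) * b `^ p) / p.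
  by field; rewrite (gt_eqF p0) (gt_eqF pm0).
rewrite e1 ler_pdivlMr // => H.
rewrite -(mulr_powRB1 (ltW b0) p0) in H *.
set B := b `^ (p - 1) in H *.
nra.
Qed.

Lemma ln_le_sub1 a : 0 < a -> ln a <= a - 1.
Proof. move=> a0; have := expR_ge1Dx (ln a); rewrite lnK ?posrE//; lra. Qed.

Lemma tangent_le0 p a b : p <= 0 -> 0 < a -> 0 < b ->
  b `^ p + p * b `^ (p-1) * (a - b) <= a `^ p.
Proof.
move=> p0 a0 b0.
have eb : b `^ (p - 1) = b `^ p / b.
  rewrite powRB ?powRr1 ?(ltW b0)//; last by rewrite (gt_eqF b0) implybT.
have ea : a `^ p = b `^ p * expR (p * (ln a - ln b)).
  by rewrite /powR (gt_eqF a0) (gt_eqF b0) -expRD; f_equal; ring.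
have hl : ln a - ln b <= a / b - 1.
  by rewrite -ln_div ?posrE// ln_le_sub1 // divr_gt0.
have h1 := expR_ge1Dx (p * (ln a - ln b)).
have h2 : p * (a / b - 1) <= p * (ln a - ln b) by nra.
have bp0 : 0 < b `^ p by rewrite powR_gt0.
rewrite ea eb.
have -> : b `^ p + p * (b `^ p / b) * (a - b) = b `^ p * (1 + p * (a / b - 1)).
  by field; rewrite gt_eqF.
rewrite ler_pM2l //; lra.
Qed.

Lemma powR_le_neg e s t : e < 0 -> 0 < t -> t <= s -> s `^ e <= t `^ e.
Proof.
move=> e0 t0 ts.
have E x : x `^ e = (x `^ (-e))^-1 by rewrite -powRN opprK.
rewrite !E.
have h : t `^ (- e) <= s `^ (- e).
  by apply: ge0_ler_powR; rewrite ?nnegrE; lra.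
rewrite lef_pV2 ?posrE ?powR_gt0 //; lra.
Qed.

Lemma lip_neg p beta s t : p <= 0 -> 0 < beta -> beta <= s -> beta <= t ->
  `| t `^ p - s `^ p | <= - p * beta `^ (p - 1) * `| t - s |.
Proof.
move=> p0 b0 bs bt.
wlog ts : s t bs bt / s <= t.
  move=> W; have /orP[h|h] := le_total s t; first exact: W.
  by rewrite (distrC (t `^ p)) (distrC t); apply: W.
have s0 : 0 < s by lra.
have t0 : 0 < t by lra.
have h1 := tangent_le0 p t s p0 t0 s0.
have h2 := tangent_le0 p s t p0 s0 t0.
have hp1 : p - 1 < 0 by lra.
have h3 := powR_le_neg (p-1) s beta hp1 b0 bs.
have h4 := powR_le_neg (p-1) t beta hp1 b0 bt.
have g1 := powR_ge0 s (p - 1).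
have g2 := powR_ge0 t (p - 1).
have k1 : 0 <= (- p) * (t - s) by apply: mulr_ge0; lra.
have k2 := mulr_ge0 k1 g2.
have h5 : t `^ p <= s `^ p by nra.
rewrite ler0_norm ?subr_le0 // ger0_norm ?subr_ge0 //.
have k3 : (- p) * (t - s) * s `^ (p - 1) <= (- p) * (t - s) * beta `^ (p - 1).
  by apply: ler_wpM2l.
nra.
Qed.
End S.
Arguments tangent_ge1 {R p a b}.
Arguments tangent_le0 {R p a b}.
Arguments powR_le_neg {R e s t}.
Arguments lip_neg {R p beta s t}.


Section V.
Context {R : realType}.
Context {d : nat}.
Implicit Types u v w : 'rV[R]_d.

Definition dot u v : R := \sum_(i < d) u ord0 i * v ord0 i.

Lemma dotC u v : dot u v = dot v u.
Proof. by apply: eq_bigr => i _; rewrite mulrC. Qed.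

Lemma dot_lin a b u v w : dot (a *: u + b *: v) w = a * dot u w + b * dot v w.
Proof.
rewrite /dot !mulr_sumr -big_split /=; apply: eq_bigr => i _.
by rewrite !mxE; ring.
Qed.

Lemma dot_linr a b u v w : dot w (a *: u + b *: v) = a * dot w u + b * dot w v.
Proof. by rewrite dotC dot_lin (dotC u) (dotC v). Qed.

Lemma dotDl u v w : dot (u + v) w = dot u w + dot v w.
Proof. by rewrite -(scale1r u) -(scale1r v) dot_lin !mul1r !scale1r. Qed.

Lemma dotZl a u w : dot (a *: u) w = a * dot u w.
Proof. by rewrite -(addr0 (a *: u)) -(scale0r u) dot_lin mul0r addr0. Qed.

Lemma dotNl u w : dot (- u) w = - dot u w.
Proof. by rewrite -scaleN1r dotZl mulN1r. Qed.

Lemma dotBl u v w : dot (u - v) w = dot u w - dot v w.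
Proof. by rewrite dotDl dotNl. Qed.

Lemma dotDr u v w : dot w (u + v) = dot w u + dot w v.
Proof. by rewrite dotC dotDl !(dotC w). Qed.
Lemma dotZr a u w : dot w (a *: u) = a * dot w u.
Proof. by rewrite dotC dotZl dotC. Qed.
Lemma dotBr u v w : dot w (u - v) = dot w u - dot w v.
Proof. by rewrite dotC dotBl !(dotC w). Qed.

Lemma dot_sum m (f : 'I_m -> 'rV[R]_d) w :
  dot (\sum_(j < m) f j) w = \sum_(j < m) dot (f j) w.
Proof.
apply: (big_rec2 (fun a b => dot a w = b)).
- by rewrite /dot big1 // => i _; rewrite mxE mul0r.
- by move=> i y1 y2 _ <-; rewrite dotDl.
Qed.

Lemma dot_ge0 v : 0 <= dot v v.
Proof. by apply: sumr_ge0 => i _; rewrite -expr2 sqr_ge0. Qed.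

Lemma enormE v : enorm v = Num.sqrt (dot v v).
Proof. by rewrite /enorm /dot; congr Num.sqrt; apply: eq_bigr => i _; rewrite expr2. Qed.

Lemma enorm_ge0 v : 0 <= enorm v.
Proof. by rewrite enormE sqrtr_ge0. Qed.

Lemma enorm_sq v : enorm v ^+ 2 = dot v v.
Proof. by rewrite enormE sqr_sqrtr // dot_ge0. Qed.

Lemma dot0_eq0 v : dot v v = 0 -> v = 0.
Proof.
move=> /eqP; rewrite psumr_eq0 => [/allP H|i _]; last by rewrite -expr2 sqr_ge0.
apply/rowP => i; rewrite !mxE; have := H i (mem_index_enum _).
by rewrite implyTb mulf_eq0 orbb => /eqP.
Qed.

Lemma enorm_eq0 v : enorm v = 0 -> v = 0.
Proof. by move=> h; apply: dot0_eq0; rewrite -enorm_sq h expr0n. Qed.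

Lemma enorm0 : enorm (0 : 'rV[R]_d) = 0.
Proof. by rewrite /enorm big1 ?sqrtr0 // => i _; rewrite mxE expr0n. Qed.

Lemma enorm_gt0 v : v != 0 -> 0 < enorm v.
Proof.
move=> v0; rewrite lt_def enorm_ge0 andbT; apply/eqP => /enorm_eq0 h.
by rewrite h eqxx in v0.
Qed.

Lemma expand_cs u v : dot (enorm v *: u - enorm u *: v) (enorm v *: u - enorm u *: v)
  = 2 * enorm u * enorm v * (enorm u * enorm v - dot u v).
Proof.
rewrite !dotBl !dotBr !dotZl !dotZr -!enorm_sq (dotC v u); ring.
Qed.

Lemma cauchy_schwarz u v : dot u v <= enorm u * enorm v.
Proof.
have hu := enorm_ge0 u; have hv := enorm_ge0 v.
have [u0|] := eqVneq (enorm u) 0.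
  by rewrite (enorm_eq0 _ u0) /dot big1 ?enorm0 ?mul0r // => i _; rewrite mxE mul0r.
have [v0|] := eqVneq (enorm v) 0.
  by rewrite (enorm_eq0 _ v0) /dot big1 ?enorm0 ?mulr0 // => i _; rewrite mxE mulr0.
move=> vn un.
have pu : 0 < enorm u by rewrite lt_def un.
have pv : 0 < enorm v by rewrite lt_def vn.
have h := dot_ge0 (enorm v *: u - enorm u *: v); rewrite expand_cs in h.
have p2 : 0 < 2 * enorm u * enorm v by rewrite !mulr_gt0.
rewrite pmulr_rge0 // in h; lra.
Qed.

Lemma enormD u v : enorm (u + v) <= enorm u + enorm v.
Proof.
rewrite -(ler_pXn2r (n:=2)) // ?nnegrE ?addr_ge0 ?enorm_ge0 //.
rewrite enorm_sq dotDl !dotDr -!enorm_sq (dotC v u).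
have := cauchy_schwarz u v; nra.
Qed.

Lemma enormZ a v : enorm (a *: v) = `|a| * enorm v.
Proof.
rewrite !enormE dotZl dotZr mulrA -expr2 sqrtrM ?sqr_ge0 //.
by rewrite sqrtr_sqr.
Qed.

Lemma enormN v : enorm (- v) = enorm v.
Proof. by rewrite -scaleN1r enormZ normrN normr1 mul1r. Qed.

Lemma enormB u v : enorm (u - v) = enorm (v - u).
Proof. by rewrite -enormN opprB. Qed.

Lemma enorm_sum m (f : 'I_m -> 'rV[R]_d) :
  enorm (\sum_(j < m) f j) <= \sum_(j < m) enorm (f j).
Proof.
apply: (big_rec2 (fun a b => enorm a <= b)); first by rewrite enorm0.
by move=> i y1 y2 _ h; apply: le_trans (enormD _ _) _; apply: lerD.
Qed.

Lemma enorm_rev u v : `| enorm u - enorm v | <= enorm (u - v).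
Proof.
have h1 := enormD (u - v) v; rewrite subrK in h1.
have h2 := enormD (v - u) u; rewrite subrK enormB in h2.
rewrite ler_norml; lra.
Qed.

Lemma enorm_eqD u v : enorm (u + v) = enorm u + enorm v ->
  enorm v *: u = enorm u *: v.
Proof.
move=> h.
have h2 : dot u v = enorm u * enorm v.
  have := congr1 (fun x => x ^+ 2) h; rewrite /= enorm_sq dotDl !dotDr -!enorm_sq (dotC v u).
  move=> e; nra.
apply/eqP; rewrite -subr_eq0; apply/eqP/dot0_eq0.
by rewrite expand_cs h2 subrr mulr0.
Qed.

End V.


Lemma midpoint_powR {R : realType} (q A B : R) : 1 <= q -> 0 <= A -> 0 <= B ->
  ((A + B) / 2) `^ q <= (A `^ q + B `^ q) / 2.
Proof.
move=> q1 A0 B0.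
have [m0|mn0] := eqVneq ((A + B) / 2) 0.
  have hA : A = 0 by lra.
  have hB : B = 0 by lra.
  by rewrite m0 hA hB powR0 ?addr0 ?mul0r // gt_eqF //; lra.
have mp : 0 < (A + B) / 2 by rewrite lt_def mn0 /=; lra.
have h1 := tangent_ge1 q1 A0 mp.
have h2 := tangent_ge1 q1 B0 mp.
lra.
Qed.

Lemma half_eq {R : realType} (u v : R) : 2^-1 * u = v / 2 -> u = v.
Proof. lra. Qed.

Lemma avg_le {R : realType} (A B C : R) : B <= A -> A <= C -> (A + B) / 2 - C <= 0.
Proof. lra. Qed.

Lemma dot0l {R : realType} {d : nat} (w : 'rV[R]_d) : dot 0 w = 0.
Proof. by rewrite -(scale0r (0 : 'rV[R]_d)) dotZl mul0r. Qed.

Lemma line_lemma {R : realType} {d : nat} (e M y : 'rV[R]_d) (A B : R) :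
  M - e != 0 -> B *: (M - y) = A *: (e - y) -> 0 <= B -> enorm (e - y) = B ->
  exists t : R, y = e + t *: (M - e).
Proof.
move=> Me h B0 hB.
have E : M - e = (M - y) - (e - y) by rewrite opprB addrA subrK.
have [AB|AB] := eqVneq A B.
  subst A.
  have : B *: (M - e) = 0 by rewrite E scalerBr h subrr.
  move/eqP; rewrite scaler_eq0 (negbTE Me) orbF => /eqP B0'.
  rewrite B0' in hB; have := enorm_eq0 _ hB => /eqP; rewrite subr_eq0 => /eqP ->.
  by exists 0; rewrite scale0r addr0.
have nz : B - A != 0 by rewrite subr_eq0 eq_sym.
exists (B / (B - A)); apply/rowP => j.
have hj := congr1 (fun w : 'rV[R]_d => w ord0 j) h; rewrite /= !mxE in hj.
rewrite !mxE; apply: (mulIf nz); rewrite mulrDl.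
have -> : B / (B - A) * (M ord0 j - e ord0 j) * (B - A) = B * (M ord0 j - e ord0 j).
  by field.
lra.
Qed.

Section Main.
Context {R : realType} {d m : nat} (x : 'I_m -> 'rV[R]_d) (eta : 'I_m -> R)
  (q : R) (M : 'rV[R]_d) (k : 'I_m).
Context (xinj : injective x) (ncol : ~ collinear x) (eta0 : forall i, 0 < eta i)
  (q1 : 1 <= q) (q2 : q < 2) (Mmin : forall y, Cq q x eta M <= Cq q x eta y)
  (kM : x k != M).

Local Notation e := (x k).
Local Notation term y i := (powR (eta i) q * powR (enorm (y - x i)) q).

Let q0 : 0 < q. Proof. have := q1; lra. Qed.
Let q1' : 1 <= q. Proof. exact: q1. Qed.

Let CqE y : Cq q x eta y = \sum_(i < m) term y i.
Proof. by []. Qed.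

Lemma mid_term (z : 'rV[R]_d) i : z = 2^-1 *: (M + e) ->
  term z i <= (term M i + term e i) / 2 /\
  (term z i = (term M i + term e i) / 2 -> exists t : R, x i = e + t *: (M - e)).
Proof.
move=> hzdef.
have ez : z - x i = 2^-1 *: ((M - x i) + (e - x i)).
  by rewrite hzdef; apply/rowP => j; rewrite !mxE; field.
set a := M - x i; set b := e - x i.
have hq := q1'.
have eta0' := eta0 i.
have ep : 0 < powR (eta i) q by rewrite powR_gt0.
have hZ : enorm (z - x i) = 2^-1 * enorm (a + b).
  by rewrite ez enormZ ger0_norm // invr_ge0 ler0n.
have hZle : enorm (z - x i) <= (enorm a + enorm b) / 2.
  by rewrite hZ; have := enormD a b; lra.
have Z0 := enorm_ge0 (z - x i).
have h1 : powR (enorm (z - x i)) q <= powR ((enorm a + enorm b) / 2) q.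
  by apply: ge0_ler_powR; rewrite ?nnegrE ?(ltW q0) //; have := enorm_ge0 a; have := enorm_ge0 b; lra.
have h2 := @midpoint_powR _ q (enorm a) (enorm b) hq (enorm_ge0 a) (enorm_ge0 b).
split.
  rewrite [leRHS](_ : _ = powR (eta i) q * ((powR (enorm a) q + powR (enorm b) q)/2)); last by rewrite /a /b; ring.
  apply: ler_wpM2l; first exact: ltW ep.
  exact: le_trans h1 h2.
move=> heq.
have heq' : powR (enorm (z - x i)) q = (powR (enorm a) q + powR (enorm b) q) / 2.
  apply: (mulfI (negbT (gt_eqF ep))); rewrite heq /a /b; ring.
have h3 : powR (enorm (z - x i)) q = powR ((enorm a + enorm b) / 2) q.
  by apply/eqP; rewrite eq_le h1 /= heq'.
have h4 : enorm (z - x i) = (enorm a + enorm b) / 2.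
  by apply: (powR_injective q0) h3; rewrite nnegrE ?divr_ge0 ?addr_ge0 ?enorm_ge0.
have h5 : enorm (a + b) = enorm a + enorm b.
  by apply: half_eq; rewrite -hZ h4.
have h6 := enorm_eqD _ _ h5.
apply: (line_lemma _ _ _ (enorm a) (enorm b)) => //.
- by rewrite subr_eq0 eq_sym.
- exact: enorm_ge0.
Qed.

Lemma not_min : Cq q x eta e <= Cq q x eta M -> False.
Proof.
move=> hle.
pose z := 2^-1 *: (M + e).
have hM := Mmin z.
have hsum : \sum_(i < m) ((term M i + term e i) / 2 - term z i) = 0.
  apply/eqP; rewrite eq_le; apply/andP; split.
    rewrite sumrB -mulr_suml big_split /=.
    by rewrite /Cq in hle hM; apply: avg_le.
  by apply: sumr_ge0 => i _; rewrite subr_ge0; case: (mid_term z i (erefl z)).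
apply: ncol; exists e, (M - e); split; first by rewrite subr_eq0 eq_sym.
move=> i; case: (mid_term z i (erefl z)) => h1 h2; apply: h2.
have hpos : forall j : 'I_m, true -> 0 <= (term M j + term e j) / 2 - term z j.
  by move=> j _; rewrite subr_ge0; case: (mid_term z j (erefl z)).
have := @psumr_eq0P _ _ (fun _ => true) (fun j => (term M j + term e j) / 2 - term z j) hpos hsum i isT.
by move/eqP; rewrite subr_eq0 eq_sym => /eqP.
Qed.

End Main.


Lemma cs_helper {R : realType} (D B a : R) : D + B ^+ 2 <= B * a -> D <= B * (a - B).
Proof. move=> h; rewrite mulrBr -expr2; lra. Qed.

Section Main2.
Context {R : realType} {d m : nat} (x : 'I_m -> 'rV[R]_d) (eta : 'I_m -> R)
  (q : R) (M : 'rV[R]_d) (k : 'I_m).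
Context (xinj : injective x) (ncol : ~ collinear x) (eta0 : forall i, 0 < eta i)
  (q1 : 1 <= q) (q2 : q < 2) (Mmin : forall y, Cq q x eta M <= Cq q x eta y)
  (kM : x k != M).

Local Notation e := (x k).
Local Notation term y i := (powR (eta i) q * powR (enorm (y - x i)) q).
Local Notation b i := (enorm (x k - x i)).
Local Notation c0 i := (powR (eta i) q * powR (b i) (q - 2)).
Local Notation R0 := (\sum_(i < m) c0 i *: (x i - x k)).

Let q0 : 0 < q. Proof. have := q1; lra. Qed.

Lemma b_gt0 i : i != k -> 0 < b i.
Proof.
move=> ik; apply: enorm_gt0; rewrite subr_eq0; apply/eqP => /xinj h.
by rewrite h eqxx in ik.
Qed.

Lemma grad_term i z :
  term e i - q * dot (c0 i *: (x i - e)) (z - e)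
   + (if i == k then powR (eta k) q * powR (enorm (z - e)) q else 0) <= term z i.
Proof.
case: (eqVneq i k) => [->|ik].
  rewrite ?eqxx subrr scaler0 dot0l enorm0 powR0 ?(gt_eqF q0) //.
  by rewrite mulr0 mulr0 subr0 add0r.
rewrite ?(negbTE ik) addr0.
have B0 := b_gt0 i ik.
have ht := tangent_ge1 q1 (enorm_ge0 (z - x i)) B0.
have hcs := cauchy_schwarz (e - x i) (z - x i).
have hid : dot (e - x i) (z - x i) = dot (e - x i) (z - e) + b i ^+ 2.
  have -> : z - x i = (z - e) + (e - x i) by rewrite addrA subrK.
  by rewrite dotDr enorm_sq.
have hD : dot (e - x i) (z - e) <= b i * (enorm (z - x i) - b i) by apply: cs_helper; rewrite -hid.
have eB : powR (b i) (q - 1) = powR (b i) (q - 2) * b i.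
  have -> : q - 1 = (q - 2) + 1 by ring.
  by rewrite powRD ?powRr1 ?(ltW B0) // (gt_eqF B0) implybT.
have hpos : 0 <= q * powR (b i) (q - 2) by rewrite mulr_ge0 ?(ltW q0) ?powR_ge0.
have h1 := ler_wpM2l hpos hD.
have h2 : powR (b i) q + q * powR (b i) (q - 2) * dot (e - x i) (z - e)
     <= powR (enorm (z - x i)) q.
  apply: le_trans ht; rewrite lerD2l eB.
  by rewrite [leRHS](_ : _ = q * powR (b i) (q - 2) * (b i * (enorm (z - x i) - b i))) //; ring.
have hN : dot (c0 i *: (x i - e)) (z - e) = - (c0 i * dot (e - x i) (z - e)).
  by rewrite dotZl -[x i - e](opprB e (x i)) dotNl mulrN.
rewrite hN.
rewrite [leLHS](_ : _ = powR (eta i) q * (powR (b i) q + q * powR (b i) (q - 2) * dot (e - x i) (z - e))); last by ring.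
by apply: ler_wpM2l => //; rewrite powR_ge0.
Qed.

Lemma grad_ineq z :
  Cq q x eta e - q * dot R0 (z - e) + powR (eta k) q * powR (enorm (z - e)) q
   <= Cq q x eta z.
Proof.
rewrite /Cq.
apply: le_trans (ler_sum _ (fun i _ => grad_term i z)).
rewrite big_split big_split /=.
rewrite [X in _ <= _ + X](bigD1 k) //= eqxx.
rewrite [X in _ <= _ + (_ + X)]big1 ?addr0; last by move=> i ik; rewrite (negbTE ik).
by rewrite sumrN -mulr_sumr -dot_sum.
Qed.

Lemma L_q1 : q = 1 -> powR (eta k) q < enorm R0.
Proof.
move=> hq; rewrite ltNge; apply/negP => hL.
apply: (@not_min _ _ _ x eta q M k ncol eta0 q1 Mmin kM).
have g := grad_ineq M.
have hcs := cauchy_schwarz R0 (M - e).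
rewrite hq in g hcs hL *.
rewrite (powRr1 (enorm_ge0 (M - e))) mul1r in g.
have hp : 0 <= (powR (eta k) 1 - enorm (\sum_(i < m) (powR (eta i) 1 * powR (b i) (1 - 2)) *: (x i - e))) * enorm (M - e).
  by apply: mulr_ge0; [rewrite subr_ge0 | exact: enorm_ge0].
move: g hcs hp hL.
set A := Cq 1 x eta e; set B := Cq 1 x eta M; set D := dot _ (M - e).
set E := powR (eta k) 1; set L := enorm _; set N := enorm (M - e).
move=> g hcs hp hL; nra.
Qed.

Lemma L_qgt1 : 1 < q -> 0 < enorm R0.
Proof.
move=> hq; rewrite lt_def enorm_ge0 andbT; apply/eqP => hL0.
apply: (@not_min _ _ _ x eta q M k ncol eta0 q1 Mmin kM).
have g := grad_ineq M.
rewrite (enorm_eq0 _ hL0) dot0l mulr0 subr0 in g.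
apply: le_trans g; by rewrite lerDl mulr_ge0 ?powR_ge0.
Qed.

End Main2.


Lemma bernoulli_nat {R : realType} (c : R) (n : nat) : 1 <= c ->
  1 + n%:R * (c - 1) <= c ^+ n.
Proof.
move=> c1; elim: n => [|n IH]; first by rewrite mul0r addr0 expr0.
rewrite exprS -natr1.
have h : c * (1 + n%:R * (c - 1)) <= c * c ^+ n by apply: ler_wpM2l => //; lra.
have hn : 0 <= n%:R * (c - 1) by apply: mulr_ge0; [exact: ler0n | lra].
have : 1 + (n%:R + 1) * (c - 1) <= c * (1 + n%:R * (c - 1)) by nra.
move=> h2; exact: le_trans h2 h.
Qed.

Lemma escape {R : realType} {V : Type} (f : V -> V) (N : V -> R) (delta c : R) :
  0 < delta -> 1 < c ->
  (forall y, 0 < N y -> N y < delta -> c * N y <= N (f y)) ->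
  forall y, 0 < N y -> N y < delta ->
  exists s : nat, (1 <= s)%N /\ (forall j : nat, (j < s)%N -> N (iter j f y) < delta)
    /\ ~ (N (iter s f y) < delta).
Proof.
move=> d0 c1 H y y0 yd.
have ex : exists n, ~~ (N (iter n f y) < delta).
  apply/not_existsP => /= all.
  have inb n : N (iter n f y) < delta by apply/negPn/negP; exact: all n.
  have grow n : c ^+ n * N y <= N (iter n f y).
    elim: n => [|n IH]; first by rewrite expr0 mul1r.
    have pos : 0 < N (iter n f y).
      by apply: lt_le_trans IH; rewrite mulr_gt0 // exprn_gt0 //; lra.
    rewrite exprSr -mulrA; apply: le_trans (H _ pos (inb n)).
    by rewrite mulrCA; apply: ler_wpM2l => //; lra.
  pose B := delta / ((c - 1) * N y).
  have B0 : 0 <= B by rewrite divr_ge0 ?mulr_ge0 //; lra.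
  have hB := archi_boundP B0.
  set n := Num.Def.archi_bound B in hB.
  have hb := bernoulli_nat c n (ltW c1).
  have g := grow n; have i := inb n.
  have cp : 0 < (c - 1) * N y by rewrite mulr_gt0 //; lra.
  have : delta < n%:R * ((c - 1) * N y) by rewrite -ltr_pdivrMr.
  have : (1 + n%:R * (c - 1)) * N y <= c ^+ n * N y by apply: ler_wpM2r => //; lra.
  nra.
have [s hs hmin] := ex_minnP ex.
exists s; split; last split.
- case: s hs hmin => [|s] //; by rewrite /= yd.
- by move=> j js; apply/negPn/negP => hj; have := hmin j hj; rewrite leqNgt js.
- by apply/negP.
Qed.

Lemma arith_final {R : realType} (L a c W1 K2 r S Ry ck : R) :
  0 < a -> a < L -> c * a = (L + a) / 2 -> 0 <= c -> 0 < r -> 0 <= W1 ->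
  0 <= K2 -> r * (c * W1 + K2 + 1) < (L - a) / 2 -> 0 < S -> S <= ck + W1 ->
  r * ck <= a -> L - r * K2 <= Ry -> c * r <= Ry / S.
Proof.
move=> a0 aL ca c0 r0 W0 K0 hr S0 hS hck hRy.
rewrite ler_pdivlMr //.
have h1 : r * S <= a + r * W1.
  have := ler_wpM2l (ltW r0) hS; rewrite mulrDr; lra.
have h2 := ler_wpM2l c0 h1.
rewrite mulrDr ca in h2.
have h3 : c * (r * S) = c * r * S by rewrite mulrA.
have h4 : c * (r * W1) = r * (c * W1) by rewrite mulrCA.
rewrite h3 h4 in h2.
move: hr; rewrite !mulrDr mulr1 => hr.
lra.
Qed.

Section Main3.
Context {R : realType} {d m : nat} (x : 'I_m -> 'rV[R]_d) (eta : 'I_m -> R)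
  (q : R) (M : 'rV[R]_d) (k : 'I_m).
Context (xinj : injective x) (ncol : ~ collinear x) (eta0 : forall i, 0 < eta i)
  (q1 : 1 <= q) (q2 : q < 2) (Mmin : forall y, Cq q x eta M <= Cq q x eta y)
  (kM : x k != M).

Local Notation e := (x k).
Local Notation b i := (enorm (x k - x i)).
Local Notation c0 i := (powR (eta i) q * powR (b i) (q - 2)).
Local Notation R0 := (\sum_(i < m) c0 i *: (x i - x k)).
Local Notation L := (enorm R0).
Local Notation cy y i := (powR (eta i) q * powR (enorm (y - x i)) (q - 2)).

Let q0 : 0 < q. Proof. have := q1; lra. Qed.

Lemma a_exists : exists a, [/\ 0 < a, a < L & exists d2, 0 < d2 /\
  forall r, 0 < r -> r < d2 -> powR (eta k) q * powR r (q - 1) <= a].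
Proof.
have ep : 0 < powR (eta k) q by rewrite powR_gt0.
have [hq|hq] := eqVneq q 1.
  exists (powR (eta k) q); split => //.
  - exact: (@L_q1 _ _ _ x eta q M k xinj ncol eta0 q1 Mmin kM hq).
  - exists 1; split => // r r0 _; rewrite hq subrr powRr0 mulr1 -hq //.
have hq' : 1 < q by rewrite lt_neqAle eq_sym hq q1.
have L0 := @L_qgt1 _ _ _ x eta q M k xinj ncol eta0 q1 Mmin kM hq'.
have hq1 : 0 < q - 1 by have := hq'; lra.
exists (L / 2); split; first by rewrite divr_gt0.
  by have := L0; lra.
exists (powR (L / 2 / powR (eta k) q) (q - 1)^-1); split.
  by rewrite powR_gt0 // divr_gt0 // divr_gt0.
move=> r r0 rd.
have h := gt0_ltr_powR hq1 (ltW r0) (ltW (lt_trans r0 rd)) rd.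
rewrite -powRrM mulVf ?(gt_eqF hq1) // powRr1 in h; last first.
  by rewrite ltW // divr_gt0 // divr_gt0.
apply: le_trans (ler_wpM2l (ltW ep) (ltW h)) _.
by rewrite mulrCA mulfV ?mulr1 // gt_eqF.
Qed.

End Main3.


Section Main4.
Context {R : realType} {d m : nat} (x : 'I_m -> 'rV[R]_d) (eta : 'I_m -> R)
  (q : R) (M : 'rV[R]_d) (k : 'I_m).
Context (xinj : injective x) (ncol : ~ collinear x) (eta0 : forall i, 0 < eta i)
  (q1 : 1 <= q) (q2 : q < 2) (Mmin : forall y, Cq q x eta M <= Cq q x eta y)
  (kM : x k != M).

Local Notation e := (x k).
Local Notation b i := (enorm (x k - x i)).
Local Notation c0 i := (powR (eta i) q * powR (b i) (q - 2)).
Local Notation R0 := (\sum_(i < m) c0 i *: (x i - x k)).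
Local Notation L := (enorm R0).
Local Notation cy y i := (powR (eta i) q * powR (enorm (y - x i)) (q - 2)).

Let q0 : 0 < q. Proof. have := q1; lra. Qed.

Lemma S_pos y : (forall i, y != x i) -> 0 < \sum_(i < m) cy y i.
Proof.
move=> yx; rewrite (bigD1 k) //=.
have hk : 0 < cy y k.
  by rewrite mulr_gt0 ?powR_gt0 // enorm_gt0 // subr_eq0.
have : 0 <= \sum_(i < m | i != k) cy y i by apply: sumr_ge0 => i _; rewrite mulr_ge0 ?powR_ge0.
move: hk; set A := cy y k; set B := \sum_(i < m | i != k) _; lra.
Qed.

Lemma T1_eq y : (forall i, y != x i) ->
  T1 q x eta y - e = (\sum_(i < m) cy y i)^-1 *: \sum_(i < m) cy y i *: (x i - e).
Proof.
move=> yx.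
have S0 := S_pos y yx.
rewrite /T1.
have -> : [exists i, y == x i] = false.
  by apply/negbTE/negP => /existsP [i /eqP hi]; have := yx i; rewrite hi eqxx.
have -> : \sum_(i < m) cy y i *: (x i - e) =
          \sum_(i < m) cy y i *: x i - (\sum_(i < m) cy y i) *: e.
  by rewrite scaler_suml -sumrB; apply: eq_bigr => i _; rewrite scalerBr.
by rewrite scalerBr scalerA mulVf ?scale1r // gt_eqF.
Qed.

Lemma expansion : exists delta c, [/\ 0 < delta, 1 < c & forall y,
  0 < enorm (y - e) -> enorm (y - e) < delta ->
  c * enorm (y - e) <= enorm (T1 q x eta y - e)].
Proof.
have [a [a0 aL [d2 [d20 hd2]]]] := @a_exists _ _ _ x eta q M k xinj ncol eta0 q1 Mmin kM.
pose binv := 1 + \sum_(i < m | i != k) (b i)^-1.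
have sum0 : 0 <= \sum_(i < m | i != k) (b i)^-1.
  by apply: sumr_ge0 => i _; rewrite invr_ge0 enorm_ge0.
have binv0 : 0 < binv by rewrite /binv; move: sum0; set S := \sum_(_ < _ | _) _; lra.
pose beta := binv^-1.
have beta0 : 0 < beta by rewrite invr_gt0.
have hbeta i : i != k -> beta <= b i.
  move=> ik.
  have bi0 := @b_gt0 _ _ _ x k xinj i ik.
  have hi : (b i)^-1 <= binv.
    rewrite /binv (bigD1 i) //=.
    have : 0 <= \sum_(j < m | (j != k) && (j != i)) (b j)^-1.
      by apply: sumr_ge0 => j _; rewrite invr_ge0 enorm_ge0.
    set S := \sum_(_ < _ | _) _; lra.
  by rewrite /beta -(invrK (b i)) lef_pV2 ?posrE ?invr_gt0.
pose h := beta / 2.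
have h0 : 0 < h by rewrite divr_gt0.
pose K := - (q - 2) * powR h (q - 2 - 1).
have K0 : 0 <= K by rewrite mulr_ge0 ?powR_ge0 //; have := q2; lra.
pose K2 := \sum_(i < m) powR (eta i) q * enorm (x i - e).
have K20 : 0 <= K2 by apply: sumr_ge0 => i _; rewrite mulr_ge0 ?powR_ge0 ?enorm_ge0.
pose W1 := \sum_(i < m) powR (eta i) q * powR h (q - 2).
have W10 : 0 <= W1 by apply: sumr_ge0 => i _; rewrite mulr_ge0 ?powR_ge0.
pose c := (L + a) / (2 * a).
have ca : c * a = (L + a) / 2 by rewrite /c; field; rewrite gt_eqF.
have c1 : 1 < c by rewrite /c ltr_pdivlMr ?mulr_gt0 // mul1r; lra.
have cge0 : 0 <= c by lra.
pose d3 := (L - a) / 2 / (c * W1 + K * K2 + 1).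
have dd0 : 0 < c * W1 + K * K2 + 1.
  have := mulr_ge0 cge0 W10; have := mulr_ge0 K0 K20; lra.
have d30 : 0 < d3 by rewrite divr_gt0 // divr_gt0 //; lra.
exists (Num.min h (Num.min d2 d3)), c; split => //.
  by rewrite !lt_min h0 d20 d30.
move=> y r0; rewrite !lt_min => /and3P [rh rd2 rd3].
set r := enorm (y - e) in r0 rh rd2 rd3 *.
have ti i : i != k -> h <= enorm (y - x i).
  move=> ik; have := enorm_rev (y - x i) (e - x i).
  rewrite (_ : y - x i - (e - x i) = y - e); last by rewrite opprB addrA subrK.
  rewrite -/r => hr; have := hbeta i ik; move: hr.
  rewrite ler_norml => /andP [hr1 hr2] hb.
  rewrite /h /beta; move: hb hr1 rh; rewrite /h /beta.
  set t := enorm (y - x i); set bb := b i; set be := binv^-1; lra.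
have yx i : y != x i.
  have [->|ik] := eqVneq i k.
    by apply/eqP => hy; move: r0; rewrite /r hy subrr enorm0 ltxx.
  by apply/eqP => hy; have := ti i ik; rewrite hy subrr enorm0; lra.
have S0 := S_pos y yx.
rewrite T1_eq // enormZ ger0_norm; last by rewrite invr_ge0 ltW.
rewrite [X in _ <= X]mulrC.
have hS : \sum_(i < m) cy y i <= cy y k + W1.
  rewrite (bigD1 k) //= lerD2l /W1 [X in _ <= X](bigD1 k) //=.
  have : \sum_(i < m | i != k) cy y i <= \sum_(i < m | i != k) powR (eta i) q * powR h (q - 2).
    apply: ler_sum => i ik; apply: ler_wpM2l; first exact: powR_ge0.
    by apply: powR_le_neg (ti i ik) => //; have := q2; lra.
  have := mulr_ge0 (powR_ge0 (eta k) q) (powR_ge0 h (q - 2)).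
  set A := \sum_(_ < _ | _) _; set B := \sum_(_ < _ | _) _; lra.
have hck : r * cy y k <= a.
  have e1 : r * cy y k = powR (eta k) q * powR r (q - 1).
    rewrite -/r mulrCA; congr (_ * _).
    have -> : q - 1 = (q - 2) + 1 by ring.
    rewrite [RHS]powRD; last by rewrite (gt_eqF r0) implybT.
    by rewrite powRr1 ?(ltW r0) // mulrC.
  by rewrite e1; apply: hd2.
have hdiff : enorm (\sum_(i < m) cy y i *: (x i - e) - R0) <= r * (K * K2).
  rewrite -sumrB.
  apply: le_trans (enorm_sum _ _) _.
  rewrite /K2 !mulr_sumr; apply: ler_sum => i _.
  rewrite -scalerBl enormZ.
  have [->|ik] := eqVneq i k; first by rewrite subrr enorm0 !mulr0.
  have hb := hbeta i ik.
  have hbh : h <= b i by rewrite /h; have := beta0; lra.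
  have hl := lip_neg (p := q - 2) (beta := h) (s := b i) (t := enorm (y - x i)).
  have hl' := hl ltac:(have := q2; lra) h0 hbh (ti i ik).
  have hrev := enorm_rev (y - x i) (e - x i).
  rewrite (_ : y - x i - (e - x i) = y - e) in hrev; last by rewrite opprB addrA subrK.
  rewrite -/r in hrev.
  rewrite -mulrBr normrM ger0_norm ?powR_ge0 //.
  have hK : `|powR (enorm (y - x i)) (q - 2) - powR (b i) (q - 2)| <= K * r.
    apply: le_trans hl' _; rewrite /K; apply: ler_wpM2l => //.
  have := ler_wpM2l (powR_ge0 (eta i) q) hK.
  move=> /(ler_wpM2r (enorm_ge0 (x i - e))).
  by move=> H; apply: le_trans H _; rewrite le_eqVlt; apply/orP; left; apply/eqP; ring.
have hR : L - r * (K * K2) <= enorm (\sum_(i < m) cy y i *: (x i - e)).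
  have := enormD (\sum_(i < m) cy y i *: (x i - e)) (R0 - \sum_(i < m) cy y i *: (x i - e)).
  rewrite addrC subrK enormB.
  move: hdiff; set A := enorm _; set B := enorm _; set C := enorm _; lra.
apply: (@arith_final _ _ a c W1 (K * K2) r _ _ _ a0 aL ca cge0 r0 W10 _ _ S0 hS hck hR).
  by rewrite mulr_ge0.
by move: rd3; rewrite /d3 ltr_pdivlMr // mulrC.
Qed.

End Main4.


Theorem lemma3 (R : realType) (d m : nat) (x : 'I_m -> 'rV[R]_d)
  (eta : 'I_m -> R) (q : R) (M : 'rV[R]_d) (k : 'I_m) :
  injective x ->
  ~ collinear x ->
  (forall i, 0 < eta i) ->
  1 <= q -> q < 2 ->
  (forall y, Cq q x eta M <= Cq q x eta y) ->
  x k != M ->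
  exists delta0 : R, 0 < delta0 /\
    forall y : 'rV[R]_d, enorm (y - x k) < delta0 -> y != x k ->
      exists s : nat, (1 <= s)%N /\
        (forall j : nat, (j < s)%N -> enorm (iter j (T1 q x eta) y - x k) < delta0) /\
        ~ (enorm (iter s (T1 q x eta) y - x k) < delta0).
Proof.
move=> xinj ncol eta0 q1 q2 Mmin kM.
have [delta [c [d0 c1 H]]] := @expansion R d m x eta q M k xinj ncol eta0 q1 q2 Mmin kM.
exists delta; split => // y yd yk.
have y0 : 0 < enorm (y - x k) by apply: enorm_gt0; rewrite subr_eq0.
exact: (escape (T1 q x eta) (fun v => enorm (v - x k)) delta c d0 c1 H y y0 yd).
Qed.
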